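(* Let $\mathbf u\in\{0,1\}^{\mathbb N}$ with $\mathbf u\ne0^k\overline1$ and $\mathbf u\ne1^k\overline0$ for all $k\ge0$. Then there is a suffix $\mathbf v$ of $\mathbf u$ such that $\inf(\mathbf v)=\inf_1(\mathbf v)=\inf_1(\mathbf u)$ and $\sup(\mathbf v)=\sup_0(\mathbf v)=\sup_0(\mathbf u)$.
   Context: Infinite words over $\{0,1\}$ are ordered lexicographically; $\overline{a}$ denotes infinite repetition of $a$ and $0^k$ is the word of $k$ zeros. For $\mathbf u=u_1u_2\cdots\in\{0,1\}^{\mathbb N}$, $\sup(\mathbf u)$ and $\inf(\mathbf u)$ are the lexicographic supremum and infimum of $\{u_ku_{k+1}\cdots:k\ge1\}$, $\inf_1(\mathbf u)=\inf\{u_{k+1}u_{k+2}\cdots:k\ge1,\ u_k=1\}$ and $\sup_0(\mathbf u)=\sup\{u_{k+1}u_{k+2}\cdots:k\ge1,\ u_k=0\}$. A suffix of $\mathbf u$ is a word $u_ku_{k+1}\cdots$ with $k\ge1$. *)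

(* Defs.v *)
(* Infinite binary words over {0,1} encoded as nat -> bool,
   with false = 0 and true = 1; positions are 0-indexed (u_1 is u 0). *)
From Stdlib Require Import Arith.

Definition word := nat -> bool.

Definition weq (u v : word) : Prop := forall i, u i = v i.

Definition lex_lt (u v : word) : Prop :=
  exists n, (forall i, i < n -> u i = v i) /\ u n = false /\ v n = true.

Definition lex_le (u v : word) : Prop := weq u v \/ lex_lt u v.

Definition is_sup (S : word -> Prop) (s : word) : Prop :=
  (forall x, S x -> lex_le x s) /\
  (forall b, (forall x, S x -> lex_le x b) -> lex_le s b).

Definition is_inf (S : word -> Prop) (m : word) : Prop :=
  (forall x, S x -> lex_le m x) /\
  (forall b, (forall x, S x -> lex_le b x) -> lex_le b m).

(* the suffix u_{j+1} u_{j+2} ... (0-indexed: drop the first j letters) *)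
Definition shift (j : nat) (u : word) : word := fun i => u (i + j).

Definition suffixes (u : word) : word -> Prop :=
  fun x => exists j, weq x (shift j u).

(* {u_{k+1} u_{k+2} ... : k >= 1, u_k = 1}  (used for inf_1) *)
Definition after1 (u : word) : word -> Prop :=
  fun x => exists j, u j = true /\ weq x (shift (S j) u).

(* {u_{k+1} u_{k+2} ... : k >= 1, u_k = 0}  (used for sup_0) *)
Definition after0 (u : word) : word -> Prop :=
  fun x => exists j, u j = false /\ weq x (shift (S j) u).

Definition zeros_then_ones (k : nat) : word := fun i => if i <? k then false else true.
Definition ones_then_zeros (k : nat) : word := fun i => if i <? k then true else false.

(* Main.v *)
Require Import Defs.
From Stdlib Require Import Arith Lia Classical FunctionalExtensionality ClassicalDescription.

Definition cw (x : word) : word := fun i => negb (x i).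
Definition wcons (b : bool) (x : word) : word :=
  fun i => match i with 0 => b | S i => x i end.

Lemma weq_eq x y : weq x y <-> x = y.
Proof. split; intro H. - apply functional_extensionality; exact H. - subst; intro; reflexivity. Qed.

Lemma cwK x : cw (cw x) = x.
Proof. apply functional_extensionality; intro i; unfold cw; destruct (x i); reflexivity. Qed.

Lemma shift_cons k u : shift k u = wcons (u k) (shift (S k) u).
Proof. apply functional_extensionality; intros [|i]; unfold shift; simpl; f_equal; lia. Qed.

Lemma shift_shift i j u : shift i (shift j u) = shift (i + j) u.
Proof. apply functional_extensionality; intro k; unfold shift; f_equal; lia. Qed.

Lemma shift0 u : shift 0 u = u.
Proof. apply functional_extensionality; intro k; unfold shift; f_equal; lia. Qed.

Lemma shift_eq k k' u : k = k' -> shift k u = shift k' u.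
Proof. intros ->; reflexivity. Qed.

Lemma least_ex (P : nat -> Prop) n : P n -> exists m, P m /\ forall i, i < m -> ~ P i.
Proof.
  induction n as [n IH] using (well_founded_induction lt_wf). intro Hn.
  destruct (classic (exists i, i < n /\ P i)) as [[i [Hi Pi]]|H].
  - apply (IH i Hi Pi).
  - exists n; split; auto. intros i Hi Pi; apply H; eauto.
Qed.

Lemma le_refl x : lex_le x x.
Proof. left; intro; reflexivity. Qed.

Lemma le_eq x y : x = y -> lex_le x y.
Proof. intros ->; apply le_refl. Qed.

Lemma lt_irrefl x : ~ lex_lt x x.
Proof. intros [n [_ [H1 H2]]]; congruence. Qed.

Lemma lt_trans x y z : lex_lt x y -> lex_lt y z -> lex_lt x z.
Proof.
  intros [n [Hn [Hx Hy]]] [m [Hm [Hy' Hz]]].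
  destruct (lt_eq_lt_dec n m) as [[H|H]|H].
  - exists n; repeat split; auto. + intros i Hi; rewrite Hn by lia; apply Hm; lia.
    + rewrite <- Hm by lia; auto.
  - subst; congruence.
  - exists m; repeat split; auto. + intros i Hi; rewrite Hn by lia; apply Hm; lia.
    + rewrite Hn by lia; auto.
Qed.

Lemma le_trans x y z : lex_le x y -> lex_le y z -> lex_le x z.
Proof.
  intros [H|H] H'.
  - apply weq_eq in H; subst; auto.
  - destruct H' as [H'|H'].
    + apply weq_eq in H'; subst; right; exact H.
    + right; eapply lt_trans; eauto.
Qed.

Lemma le_lt_trans x y z : lex_le x y -> lex_lt y z -> lex_lt x z.
Proof. intros [H|H] H'. - apply weq_eq in H; subst; auto. - eapply lt_trans; eauto. Qed.

Lemma lt_le_trans x y z : lex_lt x y -> lex_le y z -> lex_lt x z.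
Proof. intros H [H'|H']. - apply weq_eq in H'; subst; auto. - eapply lt_trans; eauto. Qed.

Lemma lt_le_false x y : lex_lt x y -> lex_le y x -> False.
Proof. intros H H'; apply (lt_irrefl x); eapply lt_le_trans; eauto. Qed.

Lemma lex_total x y : lex_le x y \/ lex_lt y x.
Proof.
  destruct (classic (exists n, x n <> y n)) as [[n Hn]|H].
  - destruct (least_ex (fun n => x n <> y n) n Hn) as [d [Hd Hmin]].
    assert (Ha : forall i, i < d -> x i = y i).
    { intros i Hi; destruct (Bool.bool_dec (x i) (y i)); auto; exfalso; eapply Hmin; eauto. }
    destruct (x d) eqn:E1, (y d) eqn:E2; try congruence.
    + right; exists d; repeat split; auto. intros i Hi; symmetry; auto.
    + left; right; exists d; repeat split; auto.
  - left; left; intro i. destruct (Bool.bool_dec (x i) (y i)); auto. exfalso; eauto.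
Qed.

Lemma cons_false_le x : lex_le (wcons false x) x.
Proof.
  destruct (classic (exists n, x n = true)) as [[n Hn]|H].
  - destruct (least_ex (fun n => x n = true) n Hn) as [d [Hd Hmin]].
    right; exists d; repeat split; auto.
    + intros i Hi. assert (x i = false) by (destruct (x i) eqn:E; auto; exfalso; eapply Hmin; eauto).
      destruct i; simpl; auto. destruct (x i) eqn:E; auto; exfalso; eapply (Hmin i); auto; lia.
    + destruct d; simpl; auto. destruct (x d) eqn:E; auto; exfalso; eapply (Hmin d); auto.
  - left; intro i. assert (forall k, x k = false) as Hf
      by (intro k; destruct (x k) eqn:E; auto; exfalso; eauto).
    destruct i; simpl; rewrite ?Hf; auto.
Qed.

Lemma le_cons_true x : lex_le x (wcons true x).
Proof.
  destruct (classic (exists n, x n = false)) as [[n Hn]|H].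
  - destruct (least_ex (fun n => x n = false) n Hn) as [d [Hd Hmin]].
    right; exists d; repeat split; auto.
    + intros i Hi. assert (x i = true) by (destruct (x i) eqn:E; auto; exfalso; eapply Hmin; eauto).
      destruct i; simpl; auto. destruct (x i) eqn:E; auto; exfalso; eapply (Hmin i); auto; lia.
    + destruct d; simpl; auto. destruct (x d) eqn:E; auto; exfalso; eapply (Hmin d); auto.
  - left; intro i. assert (forall k, x k = true) as Hf
      by (intro k; destruct (x k) eqn:E; auto; exfalso; eauto).
    destruct i; simpl; rewrite ?Hf; auto.
Qed.

Lemma cons_le_mono c x y : lex_le x y -> lex_le (wcons c x) (wcons c y).
Proof.
  intros [H|[n [Hn [H1 H2]]]].
  - apply weq_eq in H; subst; apply le_refl.
  - right; exists (S n); repeat split; auto. intros [|i] Hi; simpl; auto; apply Hn; lia.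
Qed.

Lemma start_lt x y : x 0 = false -> y 0 = true -> lex_lt x y.
Proof. intros; exists 0; repeat split; auto; intros; lia. Qed.

Lemma cw_lt x y : lex_lt x y -> lex_lt (cw y) (cw x).
Proof.
  intros [n [Hn [H1 H2]]]; exists n; repeat split; unfold cw.
  - intros i Hi; rewrite Hn; auto.
  - rewrite H2; auto. - rewrite H1; auto.
Qed.

Lemma cw_le x y : lex_le x y -> lex_le (cw y) (cw x).
Proof. intros [H|H]. - apply weq_eq in H; subst; apply le_refl. - right; apply cw_lt; auto. Qed.

Section InfEx.
Variable S0 : word -> Prop.

Definition stepb (n : nat) (pre : word) : bool :=
  if excluded_middle_informative
       (exists x, S0 x /\ (forall i, i < n -> x i = pre i) /\ x n = false)
  then false else true.

Fixpoint pw (n : nat) : word :=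
  match n with
  | 0 => fun _ => false
  | S n => fun i => if i <? n then pw n i else stepb n (pw n)
  end.

Definition minw : word := fun n => pw (S n) n.

Lemma pw_S n i : pw (S n) i = if i <? n then pw n i else stepb n (pw n).
Proof. reflexivity. Qed.

Lemma pw_stable : forall d i, pw (S i + d) i = minw i.
Proof.
  induction d; intro i.
  - unfold minw; f_equal; lia.
  - replace (S i + S d) with (S (S i + d)) by lia. rewrite pw_S.
    rewrite (proj2 (Nat.ltb_lt i (S i + d))) by lia. apply IHd.
Qed.

Lemma pw_min n i : i < n -> pw n i = minw i.
Proof. intro H; replace n with (S i + (n - S i)) by lia; apply pw_stable. Qed.

Lemma minw_step n : minw n = stepb n (pw n).
Proof. unfold minw; simpl. rewrite Nat.ltb_irrefl; reflexivity. Qed.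

Lemma inf_exists : (exists x, S0 x) -> is_inf S0 minw.
Proof.
  intro Hne.
  assert (F2 : forall n, exists x, S0 x /\ forall i, i < n -> x i = minw i).
  { induction n.
    - destruct Hne as [x Hx]; exists x; split; auto; intros; lia.
    - destruct IHn as [x [Hx Ha]].
      destruct (classic (exists y, S0 y /\ (forall i, i < n -> y i = pw n i) /\ y n = false))
        as [Hy|Hy].
      + destruct Hy as [y [Sy [Hya Hyn]]]. exists y; split; auto.
        intros i Hi. destruct (Nat.eq_dec i n).
        * subst i. rewrite minw_step; unfold stepb.
          destruct excluded_middle_informative as [_|C]; auto. exfalso; apply C; eauto.
        * rewrite Hya by lia. apply pw_min; lia.
      + exists x; split; auto. intros i Hi. destruct (Nat.eq_dec i n).
        * subst i. rewrite minw_step; unfold stepb.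
          destruct excluded_middle_informative as [C|_]; [contradiction|].
          destruct (x n) eqn:E; auto. exfalso; apply Hy; exists x; repeat split; auto.
          intros k Hk; rewrite pw_min by lia; auto.
        * apply Ha; lia. }
  split.
  - intros x Sx. destruct (lex_total minw x) as [H|H]; auto. exfalso.
    destruct H as [d [Hd [Hx Hm]]].
    rewrite minw_step in Hm. unfold stepb in Hm.
    destruct excluded_middle_informative as [_|C]; [discriminate|].
    apply C. exists x; repeat split; auto. intros i Hi; rewrite pw_min by lia; rewrite Hd; auto.
  - intros b Hb. destruct (lex_total b minw) as [H|H]; auto. exfalso.
    destruct H as [d [Hd [Hm Hb']]].
    destruct (F2 (S d)) as [x [Sx Hx]].
    apply (lt_le_false x b); [|apply Hb; auto].
    exists d; repeat split; auto.
    + intros i Hi; rewrite Hx by lia; apply Hd; auto.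
    + rewrite Hx by lia; auto.
Qed.
End InfEx.

Lemma is_inf_ext S T m : (forall x, S x <-> T x) -> is_inf S m -> is_inf T m.
Proof. intros E [H1 H2]; split; [intros x Tx; apply H1, E, Tx|intros b Hb; apply H2; intros x Sx; apply Hb, E, Sx]. Qed.

Lemma is_sup_ext S T m : (forall x, S x <-> T x) -> is_sup S m -> is_sup T m.
Proof. intros E [H1 H2]; split; [intros x Tx; apply H1, E, Tx|intros b Hb; apply H2; intros x Sx; apply Hb, E, Sx]. Qed.

Lemma inf_cw S m : is_inf (fun x => S (cw x)) m -> is_sup S (cw m).
Proof.
  intros [H1 H2]; split.
  - intros x Sx. rewrite <- (cwK x) at 1. apply cw_le, H1. rewrite cwK; auto.
  - intros b Hb. rewrite <- (cwK b). apply cw_le, H2. intros x Sx.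
    rewrite <- (cwK x). apply cw_le, Hb, Sx.
Qed.

Lemma sup_cw S m : is_sup (fun x => S (cw x)) m -> is_inf S (cw m).
Proof.
  intros [H1 H2]; split.
  - intros x Sx. rewrite <- (cwK x). apply cw_le, H1. rewrite cwK; auto.
  - intros b Hb. rewrite <- (cwK b). apply cw_le, H2. intros x Sx.
    rewrite <- (cwK x). apply cw_le, Hb, Sx.
Qed.

Lemma sup_exists S : (exists x, S x) -> exists M, is_sup S M.
Proof.
  intros [x Sx]. exists (cw (minw (fun y => S (cw y)))). apply inf_cw, inf_exists.
  exists (cw x); rewrite cwK; auto.
Qed.

Lemma inf_exists' S : (exists x, S x) -> exists m, is_inf S m.
Proof. intro H; exists (minw S); apply inf_exists; auto. Qed.

Lemma inf_transfer S T m : is_inf S m -> (forall x, T x -> lex_le m x) ->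
  (forall y, S y -> exists x, T x /\ lex_le x y) -> is_inf T m.
Proof.
  intros [H1 H2] HT HS; split; auto. intros b Hb; apply H2; intros y Sy.
  destruct (HS y Sy) as [x [Tx Hx]]; eapply le_trans; eauto.
Qed.

Lemma sup_transfer S T m : is_sup S m -> (forall x, T x -> lex_le x m) ->
  (forall y, S y -> exists x, T x /\ lex_le y x) -> is_sup T m.
Proof.
  intros [H1 H2] HT HS; split; auto. intros b Hb; apply H2; intros y Sy.
  destruct (HS y Sy) as [x [Tx Hx]]; eapply le_trans; eauto.
Qed.

Lemma inf_min T m : T m -> (forall x, T x -> lex_le m x) -> is_inf T m.
Proof. intros Tm H; split; auto. Qed.

Lemma after1_iff w x : after1 w x <-> exists j, w j = true /\ x = shift (S j) w.
Proof. split; intros [j [H1 H2]]; exists j; split; auto; apply weq_eq; auto. Qed.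
Lemma after0_iff w x : after0 w x <-> exists j, w j = false /\ x = shift (S j) w.
Proof. split; intros [j [H1 H2]]; exists j; split; auto; apply weq_eq; auto. Qed.
Lemma suffixes_iff w x : suffixes w x <-> exists j, x = shift j w.
Proof. split; intros [j H2]; exists j; apply weq_eq; auto. Qed.

Lemma InfAll w c : (forall i, w i = true -> lex_le c (shift (S i) w)) -> lex_le c w ->
  forall k, lex_le c (shift k w).
Proof.
  intros H H0 k; induction k.
  - rewrite shift0; auto.
  - destruct (w k) eqn:E; auto.
    eapply le_trans; [exact IHk|]. rewrite shift_cons, E. apply cons_false_le.
Qed.

Lemma SupAll w c : (forall i, w i = false -> lex_le (shift (S i) w) c) -> lex_le w c ->
  forall k, lex_le (shift k w) c.
Proof.
  intros H H0 k; induction k.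
  - rewrite shift0; auto.
  - destruct (w k) eqn:E; auto.
    eapply le_trans; [|exact IHk]. rewrite (shift_cons k), E. apply le_cons_true.
Qed.

Lemma shift_at j u i : shift j u i = u (i + j).
Proof. reflexivity. Qed.

Lemma shift1_cons c x : shift 1 (wcons c x) = x.
Proof. apply functional_extensionality; intro i; unfold shift; rewrite Nat.add_1_r; reflexivity. Qed.

Lemma core u (hu0 : u 0 = true) (hall1 : ~ weq u (zeros_then_ones 0))
  (h1 : forall k : nat, ~ weq u (ones_then_zeros k)) :
  exists j : nat,
    let v := shift j u in
    (exists m : word,
        is_inf (suffixes v) m /\ is_inf (after1 v) m /\ is_inf (after1 u) m) /\
    (exists M : word,
        is_sup (suffixes v) M /\ is_sup (after0 v) M /\ is_sup (after0 u) M).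
Proof.
  assert (Hz : exists n, u n = false).
  { apply NNPP; intro C; apply hall1; intro i. unfold zeros_then_ones; simpl.
    destruct (u i) eqn:E; auto. exfalso; eauto. }
  destruct Hz as [n0 Hn0].
  destruct (least_ex (fun n => u n = false) n0 Hn0) as [q [Hq Hqmin]].
  assert (Hlt : forall i, i < q -> u i = true).
  { intros i Hi; destruct (u i) eqn:E; auto; exfalso; eapply Hqmin; eauto. }
  assert (q1 : 1 <= q) by (destruct q; [congruence|lia]).
  assert (Zq : forall i, u i = false -> q <= i).
  { intros i Hi. destruct (le_lt_dec q i); auto. rewrite Hlt in Hi; [discriminate|lia]. }
  assert (Hr : exists r, q < r /\ u r = true).
  { apply NNPP; intro C; apply (h1 q); intro i. unfold ones_then_zeros.
    destruct (Nat.ltb_spec i q).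
    - apply Hlt; auto.
    - destruct (Nat.eq_dec i q); [subst; auto|].
      destruct (u i) eqn:E; auto. exfalso; apply C; exists i; split; auto; lia. }
  destruct Hr as [r0 Hr0].
  destruct (least_ex (fun r => q < r /\ u r = true) r0 Hr0) as [r [[Hqr Hur] Hrmin]].
  assert (Hur1 : u (r - 1) = false).
  { destruct (u (r-1)) eqn:E; auto. destruct (Nat.eq_dec (r-1) q).
    - rewrite e in E; congruence.
    - exfalso; apply (Hrmin (r-1)); [lia|split; auto; lia]. }
  set (w0 := shift q u).
  assert (w00 : w0 0 = false) by (unfold w0; rewrite shift_at; simpl; auto).
  destruct (inf_exists' (after1 w0)) as [a' Ha'].
  { exists (shift (S (r - q)) w0). apply after1_iff. exists (r - q); split; auto.
    unfold w0; rewrite shift_at. replace (r - q + q) with r by lia; auto. }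
  destruct (sup_exists (after0 u)) as [b Hb].
  { exists (shift (S q) u); apply after0_iff; eauto. }
  assert (SupAllU : forall k, q <= k -> lex_le (shift k u) b).
  { intros k Hk. replace (shift k u) with (shift (k - q) w0)
      by (unfold w0; rewrite shift_shift; apply shift_eq; lia).
    apply SupAll.
    - intros i Hi. apply (proj1 Hb). apply after0_iff. exists (i + q); split; auto.
      unfold w0; rewrite shift_shift; apply shift_eq; lia.
    - assert (uq : u q = false) by auto.
      apply le_trans with (shift (S q) u).
      + unfold w0. rewrite shift_cons, uq. apply cons_false_le.
      + apply (proj1 Hb). apply after0_iff; exists q; split; auto. }
  assert (after0_shift : forall j i, j <= q -> u i = false ->
            after0 (shift j u) (shift (S i) u)).
  { intros j i Hj Hi. apply after0_iff. exists (i - j). split.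
    - rewrite shift_at. replace (i - j + j) with i by (specialize (Zq i Hi); lia); auto.
    - rewrite shift_shift. apply shift_eq. specialize (Zq i Hi); lia. }
  assert (after0_back : forall j x, after0 (shift j u) x -> after0 u x).
  { intros j x Hx. apply after0_iff in Hx. destruct Hx as [i [Hi ->]].
    apply after0_iff; exists (i + j); split; auto. rewrite shift_shift; apply shift_eq; lia. }
  assert (after1_back : forall j x, after1 (shift j u) x -> after1 u x).
  { intros j x Hx. apply after1_iff in Hx. destruct Hx as [i [Hi ->]].
    apply after1_iff; exists (i + j); split; auto. rewrite shift_shift; apply shift_eq; lia. }
  destruct (lex_total a' w0) as [CA|CB].
  -
    exists q. cbv zeta. fold w0. split.
    + exists a'. split; [|split]; auto.
      * apply (inf_transfer (after1 w0)); auto.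
        -- intros x Hx. apply suffixes_iff in Hx. destruct Hx as [k ->].
           apply InfAll; auto. intros i Hi. apply (proj1 Ha'). apply after1_iff; eauto.
        -- intros y Hy. exists y; split; [|apply le_refl].
           apply after1_iff in Hy. destruct Hy as [i [_ ->]]. apply suffixes_iff; eauto.
      * apply (inf_transfer (after1 w0)); auto.
        -- intros x Hx. apply after1_iff in Hx. destruct Hx as [i [Hi ->]].
           destruct (le_lt_dec q i).
           ++ apply (proj1 Ha'). apply after1_iff. exists (i - q). split.
              ** unfold w0; rewrite shift_at. replace (i - q + q) with i by lia; auto.
              ** unfold w0; rewrite shift_shift; apply shift_eq; lia.
           ++ destruct (Nat.eq_dec (S i) q).
              ** rewrite e; exact CA.
              ** right. eapply le_lt_trans; [exact CA|]. apply start_lt; auto.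
                 rewrite shift_at; simpl; apply Hlt; lia.
        -- intros y Hy. exists y; split; [|apply le_refl]. apply (after1_back q); auto.
    + exists b. split; [|split]; auto.
      * apply (sup_transfer (after0 u)); auto.
        -- intros x Hx. apply suffixes_iff in Hx. destruct Hx as [k ->].
           unfold w0; rewrite shift_shift; apply SupAllU; lia.
        -- intros y Hy. exists y; split; [|apply le_refl].
           apply after0_iff in Hy. destruct Hy as [i [Hi ->]].
           apply suffixes_iff. exists (S i - q). unfold w0; rewrite shift_shift; apply shift_eq.
           specialize (Zq i Hi); lia.
      * apply (sup_transfer (after0 u)); auto.
        -- intros x Hx. apply (proj1 Hb). apply (after0_back q); auto.
        -- intros y Hy. exists y; split; [|apply le_refl].
           apply after0_iff in Hy. destruct Hy as [i [Hi ->]]. apply after0_shift; auto.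
  -
    exists (q - 1). cbv zeta. set (v := shift (q - 1) u).
    assert (Hv : v = wcons true w0).
    { unfold v, w0. rewrite shift_cons. rewrite Hlt by lia. f_equal. apply shift_eq; lia. }
    assert (LB : forall y, after1 u y -> lex_le w0 y).
    { intros y Hy. apply after1_iff in Hy. destruct Hy as [i [Hi ->]].
      destruct (le_lt_dec q i).
      - right. eapply lt_le_trans; [exact CB|]. apply (proj1 Ha'). apply after1_iff.
        exists (i - q). split.
        + unfold w0; rewrite shift_at. replace (i - q + q) with i by lia; auto.
        + unfold w0; rewrite shift_shift; apply shift_eq; lia.
      - destruct (Nat.eq_dec (S i) q).
        + rewrite e; apply le_refl.
        + right. apply start_lt; auto. rewrite shift_at; simpl; apply Hlt; lia. }
    assert (after1_v : forall y, after1 v y -> lex_le w0 y).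
    { intros y Hy; apply LB; apply (after1_back (q - 1)); auto. }
    split.
    + exists w0. split; [|split].
      * apply inf_min.
        -- apply suffixes_iff. exists 1. rewrite Hv. symmetry; apply shift1_cons.
        -- intros x Hx. apply suffixes_iff in Hx. destruct Hx as [k ->].
           apply InfAll.
           ++ intros i Hi. apply after1_v. apply after1_iff; eauto.
           ++ rewrite Hv; apply le_cons_true.
      * apply inf_min; auto. apply after1_iff. exists 0. rewrite Hv; split; auto.
        symmetry; apply shift1_cons.
      * apply inf_min; auto. apply after1_iff. exists (q - 1). split; [apply Hlt; lia|].
        unfold w0; apply shift_eq; lia.
    + exists b. split; [|split]; auto.
      * apply (sup_transfer (after0 u)); auto.
        -- intros x Hx. apply suffixes_iff in Hx. destruct Hx as [k ->].
           destruct k.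
           ++ rewrite shift0. rewrite Hv.
              apply le_trans with (shift r u).
              ** rewrite (shift_cons r), Hur. apply cons_le_mono. apply LB.
                 apply after1_iff; eauto.
              ** apply (proj1 Hb). apply after0_iff. exists (r - 1); split; auto.
                 apply shift_eq; lia.
           ++ unfold v; rewrite shift_shift; apply SupAllU; lia.
        -- intros y Hy. exists y; split; [|apply le_refl].
           apply after0_iff in Hy. destruct Hy as [i [Hi ->]].
           apply suffixes_iff. exists (S i - (q - 1)). unfold v; rewrite shift_shift; apply shift_eq.
           specialize (Zq i Hi); lia.
      * apply (sup_transfer (after0 u)); auto.
        -- intros x Hx. apply (proj1 Hb). apply (after0_back (q - 1)); auto.
        -- intros y Hy. exists y; split; [|apply le_refl].
           apply after0_iff in Hy. destruct Hy as [i [Hi ->]]. apply after0_shift; auto; lia.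
Qed.

Lemma suffixes_cw w x : suffixes (cw w) x <-> suffixes w (cw x).
Proof.
  split; intros [j H]; exists j; intro i; specialize (H i); unfold cw, shift in *;
  destruct (x i), (w (i + j)); simpl in *; congruence.
Qed.

Lemma after1_cw w x : after1 (cw w) x <-> after0 w (cw x).
Proof.
  split; intros [j [Hj H]]; exists j; unfold cw in Hj;
  (split; [unfold cw; destruct (w j); simpl in *; congruence|]);
  intro i; specialize (H i); unfold cw, shift in *;
  destruct (x i), (w (i + S j)); simpl in *; congruence.
Qed.

Lemma after0_cw w x : after0 (cw w) x <-> after1 w (cw x).
Proof.
  split; intros [j [Hj H]]; exists j; unfold cw in Hj;
  (split; [unfold cw; destruct (w j); simpl in *; congruence|]);
  intro i; specialize (H i); unfold cw, shift in *;
  destruct (x i), (w (i + S j)); simpl in *; congruence.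
Qed.

Theorem lemma2p5 (u : word)
  (h0 : forall k : nat, ~ weq u (zeros_then_ones k))
  (h1 : forall k : nat, ~ weq u (ones_then_zeros k)) :
  exists j : nat,
    let v := shift j u in
    (exists m : word,
        is_inf (suffixes v) m /\ is_inf (after1 v) m /\ is_inf (after1 u) m) /\
    (exists M : word,
        is_sup (suffixes v) M /\ is_sup (after0 v) M /\ is_sup (after0 u) M).
Proof.
  destruct (u 0) eqn:E.
  - apply core; auto.
  - destruct (core (cw u)) as [j [[m [H1 [H2 H3]]] [M [H4 [H5 H6]]]]].
    + unfold cw; rewrite E; reflexivity.
    + intro C; apply (h1 0); intro i; specialize (C i). unfold cw, zeros_then_ones, ones_then_zeros in *.
      simpl in *. destruct (u i); simpl in *; congruence.
    + intros k C; apply (h0 k); intro i; specialize (C i).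
      unfold cw, zeros_then_ones, ones_then_zeros in *.
      destruct (i <? k), (u i); simpl in *; congruence.
    + exists j; cbv zeta. split.
      * exists (cw M). split; [|split]; apply sup_cw.
        -- eapply is_sup_ext; [|exact H4]. intro x. apply (suffixes_cw (shift j u)).
        -- eapply is_sup_ext; [|exact H5]. intro x. apply (after0_cw (shift j u)).
        -- eapply is_sup_ext; [|exact H6]. intro x. apply (after0_cw u).
      * exists (cw m). split; [|split]; apply inf_cw.
        -- eapply is_inf_ext; [|exact H1]. intro x. apply (suffixes_cw (shift j u)).
        -- eapply is_inf_ext; [|exact H2]. intro x. apply (after1_cw (shift j u)).
        -- eapply is_inf_ext; [|exact H3]. intro x. apply (after1_cw u).
Qed.
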